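(* Let $G_1$ and $G_2$ be graphs admitting arithmetic IASIs. Then the corona $G_1\circ G_2$ admits an arithmetic IASI (in which $G_1$ and each copy of $G_2$ carry labels with the deterministic indices of the given labelings) if and only if the deterministic index of every vertex of one graph is $k$ times or $1/k$ times the deterministic index of every vertex of the other, for a positive integer $k$ at most the set-indexing number of the vertex having the smaller deterministic index.
   Context: All graphs are simple, finite, with no isolated vertices; all sets are finite subsets of $\mathbb{N}_0$; $A+B=\{a+b:a\in A,b\in B\}$. An IASI of $G$ is an injective $f:V(G)\to 2^{\mathbb{N}_0}$ with $g_f(uv)=f(u)+f(v)$ injective on $E(G)$. The set-indexing number of an element is the cardinality of its set-label. An AP-set is a set whose elements form an arithmetic progression; the common difference of the set-label of an element is its deterministic index. An arithmetic IASI is an IASI under which all vertex and edge set-labels are AP-sets. The corona $G_1\circ G_2$ is obtained from one copy of $G_1$ (with $p_1$ vertices) and $p_1$ copies of $G_2$ by joining the $i$-th vertex of $G_1$ to every vertex of the $i$-th copy of $G_2$. *)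

(* Defs.v *)
From mathcomp Require Import all_boot.
Set Implicit Arguments. Unset Strict Implicit. Unset Printing Implicit Defensive.

(* A finite subset of N_0 is represented by a seq nat; two such labels denote
   the same set iff they are extensionally equal (=i). *)

Definition setcard (S : seq nat) : nat := size (undup S).

Definition sumset (A B : seq nat) : seq nat := [seq a + b | a <- A, b <- B].

Definition has_dindex (S : seq nat) (d : nat) : Prop :=
  exists a n, 0 < d /\ 1 < n /\ S =i [seq a + i * d | i <- iota 0 n].

Definition APset (S : seq nat) : Prop := exists d, has_dindex S d.

Definition simple_graph (T : finType) (e : rel T) : Prop :=
  symmetric e /\ irreflexive e /\ (forall x, exists y, e x y).

Definition IASI (T : finType) (e : rel T) (f : T -> seq nat) : Prop :=
  (forall u v, f u =i f v -> u = v) /\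
  (forall u v x y, e u v -> e x y ->
     sumset (f u) (f v) =i sumset (f x) (f y) ->
     (u = x /\ v = y) \/ (u = y /\ v = x)).

Definition arithmetic_IASI (T : finType) (e : rel T) (f : T -> seq nat) : Prop :=
  IASI e f /\ (forall v, APset (f v)) /\
  (forall u v, e u v -> APset (sumset (f u) (f v))).

(* Corona G1 o G2: vertices inl i (the i-th vertex of G1) and inr (i, v)
   (vertex v of the i-th copy of G2). *)
Definition corona (T1 T2 : finType) (e1 : rel T1) (e2 : rel T2)
  : rel (T1 + T1 * T2)%type :=
  fun x y =>
    match x, y with
    | inl a, inl b => e1 a b
    | inl a, inr (i, _) => i == a
    | inr (i, _), inl a => i == a
    | inr (i, v), inr (j, w) => (i == j) && e2 v w
    end.

(* Main.v *)
Require Import Defs.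
From mathcomp Require Import all_boot.
From mathcomp Require Import zify.
Set Implicit Arguments. Unset Strict Implicit.

Definition AP a d n := [seq a + i * d | i <- iota 0 n].

Lemma memAP z a d n : z \in AP a d n <-> exists2 i, i < n & z = a + i * d.
Proof.
split.
- by case/mapP=> i; rewrite mem_iota add0n => /andP[_ Hi] ->; exists i.
- by case=> i Hi ->; apply/mapP; exists i => //; rewrite mem_iota add0n.
Qed.

Lemma mem_sumset z A B : z \in sumset A B <-> exists x y, [/\ x \in A, y \in B & z = x + y].
Proof.
split.
- by case/allpairsP=> [[x y]] /= [Hx Hy ->]; exists x, y.
- by case=> x [y [Hx Hy ->]]; apply/allpairsP; exists (x, y).
Qed.

Lemma sumsetC A B : sumset A B =i sumset B A.
Proof.
move=> z; apply/idP/idP => /mem_sumset [x [y [Hx Hy ->]]]; apply/mem_sumset;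
 exists y, x; split => //; lia.
Qed.

Lemma uniqAP a d n : 0 < d -> uniq (AP a d n).
Proof.
move=> Hd; rewrite map_inj_uniq ?iota_uniq // => i j /eqP.
by rewrite eqn_add2l eqn_pmul2r // => /eqP.
Qed.

Lemma setcardAP S a d n : 0 < d -> S =i AP a d n -> setcard S = n.
Proof.
move=> Hd HS; rewrite /setcard.
have E : undup S =i AP a d n by move=> z; rewrite mem_undup HS.
have := uniq_perm (undup_uniq S) (uniqAP a n Hd) E.
by move/perm_size ->; rewrite size_map size_iota.
Qed.

Lemma shiftAP S a d n c : S =i AP a d n -> [seq x + c | x <- S] =i AP (a + c) d n.
Proof.
move=> HS z; apply/idP/idP.
- case/mapP=> x; rewrite HS => /memAP [i Hi ->] ->; apply/memAP; exists i => //; lia.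
- case/memAP=> i Hi ->; apply/mapP; exists (a + i * d); last lia.
  by rewrite HS; apply/memAP; exists i.
Qed.

Lemma shift_dindex S d c : has_dindex S d -> has_dindex [seq x + c | x <- S] d.
Proof.
case=> a [n [Hd [Hn HS]]]; exists (a + c), n; split => //; split => //.
exact: (shiftAP c HS).
Qed.

Lemma eqi_dindex S S' d : S =i S' -> has_dindex S d -> has_dindex S' d.
Proof.
move=> E [a [n [Hd [Hn HS]]]]; exists a, n; split => //; split => //.
by move=> z; rewrite -E.
Qed.

Lemma eqi_APset S S' : S =i S' -> APset S -> APset S'.
Proof. by move=> E [d H]; exists d; exact: eqi_dindex H. Qed.

Lemma sumset_shift A B c c' :
  sumset [seq x + c | x <- A] [seq y + c' | y <- B] =i [seq z + (c + c') | z <- sumset A B].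
Proof.
move=> z; apply/idP/idP.
- case/mem_sumset=> x [y [/mapP[x' Hx ->] /mapP[y' Hy ->] ->]].
  apply/mapP; exists (x' + y'); first by apply/mem_sumset; exists x', y'.
  lia.
- case/mapP=> w /mem_sumset [x [y [Hx Hy ->]]] ->.
  apply/mem_sumset; exists (x + c), (y + c'); split; last lia.
  by apply/mapP; exists x. by apply/mapP; exists y.
Qed.

Lemma sumAP A B a b d k m n : 0 < d -> 0 < k -> k <= m -> 0 < m -> 0 < n ->
  A =i AP a d m -> B =i AP b (k * d) n ->
  sumset A B =i AP (a + b) d (m.-1 + n.-1 * k).+1.
Proof.
move=> Hd Hk Hkm Hm Hn HA HB z; apply/idP/idP.
- case/mem_sumset=> x [y []]; rewrite HA HB => /memAP[i Hi ->] /memAP[j Hj ->] ->.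
  apply/memAP; exists (i + j * k).
    have : j * k <= n.-1 * k by rewrite leq_mul2r; apply/orP; right; lia.
    lia.
  nia.
- case/memAP=> t Ht ->.
  have Et := divn_eq t k; have Hr := ltn_pmod t Hk.
  set q := t %/ k in Et; set r := t %% k in Et Hr.
  case: (leqP q n.-1) => Hq.
  + apply/mem_sumset; exists (a + r * d), (b + q * (k * d)); split.
    * by rewrite HA; apply/memAP; exists r => //; lia.
    * by rewrite HB; apply/memAP; exists q => //; lia.
    * rewrite Et; nia.
  + have H1 : n.-1 * k <= q * k by rewrite leq_mul2r; apply/orP; right; lia.
    apply/mem_sumset; exists (a + (t - n.-1 * k) * d), (b + n.-1 * (k * d)); split.
    * by rewrite HA; apply/memAP; exists (t - n.-1 * k) => //; lia.
    * by rewrite HB; apply/memAP; exists n.-1 => //; lia.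
    * have H2 : (t - n.-1 * k) * d = t * d - n.-1 * k * d by rewrite mulnBl.
      have H3 : n.-1 * k * d <= t * d by rewrite leq_mul2r; apply/orP; right; lia.
      nia.
Qed.

Lemma sumAP_inv A B a b c d1 d2 D m n N : 0 < d1 -> 0 < d2 -> 1 < m -> 1 < n ->
  1 < N -> 0 < D -> d1 <= d2 ->
  A =i AP a d1 m -> B =i AP b d2 n -> sumset A B =i AP c D N ->
  exists k, [/\ 0 < k, d2 = k * d1 & k <= m].
Proof.
move=> H1 H2 Hm Hn HN HD H12 HA HB HS.
have inS : forall i j, i < m -> j < n -> exists2 t, t < N & a + i * d1 + (b + j * d2) = c + t * D.
  move=> i j Hi Hj; apply/memAP; rewrite -HS; apply/mem_sumset.
  exists (a + i * d1), (b + j * d2); split => //.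
  by rewrite HA; apply/memAP; exists i. by rewrite HB; apply/memAP; exists j.
have fromS : forall t, t < N -> exists i j, [/\ i < m, j < n & c + t * D = a + i * d1 + (b + j * d2)].
  move=> t Ht; have : c + t * D \in sumset A B by rewrite HS; apply/memAP; exists t.
  case/mem_sumset=> x [y []]; rewrite HA HB => /memAP[i Hi ->] /memAP[j Hj ->] ->.
  by exists i, j.
have [t0 _ E0] := inS 0 0 ltac:(lia) ltac:(lia).
have [i0 [j0 [_ _ E0']]] := fromS 0 ltac:(lia).
have Ec : c = a + b by nia.
have [t1 _ E1] := inS 1 0 ltac:(lia) ltac:(lia).
have Dle : D <= d1.
  have : t1 * D = d1 by lia.
  case: t1 {E1} => [|t1] E; first lia.
  rewrite -E mulSn; lia.
have [i1 [j1 [_ _ E1']]] := fromS 1 ltac:(lia).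
have Dge : d1 <= D.
  have E : D = i1 * d1 + j1 * d2 by lia.
  case: i1 {E1'} E => [|i1] E; last by rewrite E mulSn; lia.
  case: j1 E => [|j1] E; first lia.
  rewrite E mulSn; lia.
have ED : D = d1 by lia.
subst D.
have [k _ Ek] := inS 0 1 ltac:(lia) ltac:(lia).
exists k.
have Ek' : d2 = k * d1 by nia.
have kpos : 0 < k by nia.
have [t2 Ht2 E2] := inS m.-1 1 ltac:(lia) ltac:(lia).
have E2' : t2 * d1 = (m.-1 + k) * d1 by nia.
move/eqP: E2'; rewrite eqn_pmul2r // => /eqP E2'.
have [i3 [j3 [Hi3 _ E3]]] := fromS m ltac:(lia).
have E3' : m * d1 = (i3 + j3 * k) * d1 by nia.
move/eqP: E3'; rewrite eqn_pmul2r // => /eqP E3'.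
split => //.
case: j3 E3' {E3} => [|j3] E; first lia.
rewrite E mulSn; lia.
Qed.

Lemma pow2_lt a b c d : a < b -> c < d -> 2 ^ a + 2 ^ b = 2 ^ c + 2 ^ d -> a = c /\ b = d.
Proof.
move=> Hab Hcd E.
have Lab : 2 ^ a < 2 ^ b by rewrite ltn_exp2l.
have Lcd : 2 ^ c < 2 ^ d by rewrite ltn_exp2l.
have Ebd : b = d.
  case: (ltngtP b d) => // H.
  - have : 2 ^ b.+1 <= 2 ^ d by rewrite leq_exp2l.
    rewrite expnS; lia.
  - have : 2 ^ d.+1 <= 2 ^ b by rewrite leq_exp2l.
    rewrite expnS; lia.
subst d; split => //.
by apply/eqP; rewrite -(@eqn_exp2l 2) //; apply/eqP; lia.
Qed.

Lemma pow2_pair a b c d : a != b -> c != d -> 2 ^ a + 2 ^ b = 2 ^ c + 2 ^ d ->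
  (a = c /\ b = d) \/ (a = d /\ b = c).
Proof.
rewrite !neq_ltn => /orP[H1|H1] /orP[H2|H2] E.
- by left; apply: pow2_lt.
- by right; apply: pow2_lt => //; lia.
- by right; case: (pow2_lt H1 H2 ltac:(lia)) => -> ->.
- by left; case: (pow2_lt H1 H2 ltac:(lia)) => -> ->.
Qed.

Lemma blockeq a b M P Q : a < 2 * M -> b < 2 * M -> a + 2 * M * P = b + 2 * M * Q -> P = Q.
Proof. move=> *; nia. Qed.

Lemma pairAP A B dA dB : has_dindex A dA -> has_dindex B dB ->
  (exists k, 0 < k /\ ((dB = k * dA /\ k <= setcard A) \/ (dA = k * dB /\ k <= setcard B))) ->
  APset (sumset A B).
Proof.
move=> [a [m [HdA [Hm HA]]]] [b [n [HdB [Hn HB]]]] [k [Hk [[E Hkm]|[E Hkm]]]].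
- rewrite (setcardAP HdA HA) in Hkm; subst dB.
  exists dA, (a + b), (m.-1 + n.-1 * k).+1; split => //; split; first by nia.
  exact: (sumAP HdA Hk Hkm (ltnW Hm) (ltnW Hn) HA HB).
- rewrite (setcardAP HdB HB) in Hkm; subst dA.
  exists dB, (b + a), (n.-1 + m.-1 * k).+1; split => //; split; first by nia.
  by move=> z; rewrite sumsetC (sumAP HdB Hk Hkm (ltnW Hn) (ltnW Hm) HB HA).
Qed.

Definition cbase (T1 T2 : finType) (f1 : T1 -> seq nat) (f2 : T2 -> seq nat)
  (x : (T1 + T1 * T2)%type) : seq nat :=
  match x with inl u => f1 u | inr p => f2 p.2 end.

Lemma dindex_nonempty S d : has_dindex S d -> exists y, y \in S.
Proof.
case=> a [n [_ [Hn HS]]]; exists a; rewrite HS; apply/memAP; exists 0 => //; lia.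
Qed.

Theorem mainTheorem10 (T1 T2 : finType) (e1 : rel T1) (e2 : rel T2)
  (f1 : T1 -> seq nat) (f2 : T2 -> seq nat) (d1 : T1 -> nat) (d2 : T2 -> nat) :
  simple_graph e1 -> simple_graph e2 ->
  arithmetic_IASI e1 f1 -> arithmetic_IASI e2 f2 ->
  (forall u, has_dindex (f1 u) (d1 u)) ->
  (forall v, has_dindex (f2 v) (d2 v)) ->
  (exists g : (T1 + T1 * T2)%type -> seq nat,
      arithmetic_IASI (corona e1 e2) g /\
      (forall u, has_dindex (g (inl u)) (d1 u) /\
                 setcard (g (inl u)) = setcard (f1 u)) /\
      (forall i v, has_dindex (g (inr (i, v))) (d2 v) /\
                   setcard (g (inr (i, v))) = setcard (f2 v)))
  <->
  (forall u, forall v, exists k, 0 < k /\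
      ((d2 v = k * d1 u /\ k <= setcard (f1 u)) \/
       (d1 u = k * d2 v /\ k <= setcard (f2 v)))).
Proof.
move=> [_ [irr1 _]] [_ [irr2 _]] [_ [_ Ae1]] [_ [_ Ae2]] Hd1 Hd2; split.
- move=> [g [[[Iv Ie] [Av Ae]] [Hl Hr]]] u v.
  have He : corona e1 e2 (inl u) (inr (u, v)) by rewrite /= eqxx.
  have [D [c [N [HD [HN HS]]]]] := Ae _ _ He.
  have [[a [m [Hda [Hm HA]]]] Hcl] := Hl u.
  have [[b [n [Hdb [Hn HB]]]] Hcr] := Hr u v.
  have cm : setcard (f1 u) = m by rewrite -Hcl; exact: setcardAP HA.
  have cn : setcard (f2 v) = n by rewrite -Hcr; exact: setcardAP HB.
  rewrite cm cn.
  case: (leqP (d1 u) (d2 v)) => H.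
  + have [k [kp Ek km]] := sumAP_inv Hda Hdb Hm Hn HN HD H HA HB HS.
    by exists k; split => //; left.
  + have HS' : sumset (g (inr (u, v))) (g (inl u)) =i AP c D N by move=> z; rewrite sumsetC HS.
    have [k [kp Ek km]] := sumAP_inv Hdb Hda Hn Hm HN HD (ltnW H) HB HA HS'.
    by exists k; split => //; right.
- move=> Hc.
  pose base := cbase f1 f2.
  pose M := (\max_(x : (T1 + T1 * T2)%type) \max_(a <- base x) a).+1.
  pose s := fun x : (T1 + T1 * T2)%type => 2 * M * 2 ^ (enum_rank x).
  pose g := fun x => [seq y + s x | y <- base x].
  have HM : forall x y, y \in base x -> y < M.
    move=> x y Hy.
    have H1 : y <= \max_(a <- base x) a := @leq_bigmax_seq _ (base x) xpredT id y Hy isT.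
    have H2 : \max_(a <- base x) a <= \max_(x : (T1 + T1 * T2)%type) \max_(a <- base x) a
      := leq_bigmax (F := fun x => \max_(a <- base x) a) x.
    rewrite /M; lia.
  have Hdb : forall x, exists dx, has_dindex (base x) dx.
    by case=> [u|[i v]]; [exists (d1 u); exact: Hd1 | exists (d2 v); exact: Hd2].
  have Hne : forall x, exists y, y \in base x.
    by move=> x; have [dx H] := Hdb x; exact: dindex_nonempty H.
  have memg : forall x z, z \in g x -> exists2 y, y \in base x & z = y + s x.
    by move=> x z /mapP.
  have irr : forall x, corona e1 e2 x x = false.
    by case=> [u|[i v]] /=; rewrite ?irr1 ?irr2 ?andbF.
  exists g; split; [split; [split|split] | split].
  + move=> x y E.
    have [y0 H0] := Hne x.
    have : y0 + s x \in g y by rewrite -E; apply: map_f.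
    case/memg=> y1 H1 E1.
    have L0 := HM _ _ H0; have L1 := HM _ _ H1.
    have := @blockeq y0 y1 M (2 ^ enum_rank x) (2 ^ enum_rank y) ltac:(lia) ltac:(lia).
    rewrite /s in E1; move=> /(_ ltac:(lia)) /eqP; rewrite eqn_exp2l // => /eqP Er.
    exact/enum_rank_inj/val_inj.
  + move=> x y x' y' Exy Exy' E.
    have [y0 H0] := Hne x; have [y1 H1] := Hne y.
    have : (y0 + s x) + (y1 + s y) \in sumset (g x') (g y').
      by rewrite -E; apply/mem_sumset; exists (y0 + s x), (y1 + s y); split => //; apply: map_f.
    case/mem_sumset=> z0 [z1 [/memg[y2 H2 ->] /memg[y3 H3 ->] E1]].
    have L0 := HM _ _ H0; have L1 := HM _ _ H1; have L2 := HM _ _ H2; have L3 := HM _ _ H3.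
    have := @blockeq (y0 + y1) (y2 + y3) M (2 ^ enum_rank x + 2 ^ enum_rank y)
       (2 ^ enum_rank x' + 2 ^ enum_rank y') ltac:(lia) ltac:(lia).
    rewrite /s in E1; move=> /(_ ltac:(nia)) E2.
    have nxy : forall a b, corona e1 e2 a b -> (enum_rank a : nat) != enum_rank b.
      move=> a b Hab; apply/negP => /eqP /val_inj /enum_rank_inj Eab.
      by rewrite Eab irr in Hab.
    have R : forall a b : (T1 + T1 * T2)%type, (enum_rank a : nat) = enum_rank b -> a = b.
      by move=> a b /val_inj /enum_rank_inj.
    case: (pow2_pair (nxy _ _ Exy) (nxy _ _ Exy') E2) => [[/R -> /R ->]|[/R -> /R ->]];
      by [left | right].
  + move=> x; have [dx H] := Hdb x; exists dx; exact: shift_dindex.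
  + move=> x y Exy.
    have HB : APset (sumset (base x) (base y)).
      case: x y Exy => [u|[i v]] [w|[j w]] /= Exy.
      * exact: Ae1.
      * apply: pairAP; [exact: Hd1 | exact: Hd2 | exact: Hc].
      * apply: (eqi_APset (sumsetC _ _)).
        apply: pairAP; [exact: Hd1 | exact: Hd2 | exact: Hc].
      * case/andP: Exy => _; exact: Ae2.
    case: HB => dd Hdd; exists dd.
    apply: (@eqi_dindex [seq z + (s x + s y) | z <- sumset (base x) (base y)]).
      by move=> z; rewrite sumset_shift.
    exact: shift_dindex.
  + move=> u; have [a [n [Hd [Hn HS]]]] := Hd1 u; split.
      exact: (shift_dindex (s (inl u)) (Hd1 u)).
    by rewrite (setcardAP Hd (shiftAP (s (inl u)) HS)) (setcardAP Hd HS).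
  + move=> i v; have [a [n [Hd [Hn HS]]]] := Hd2 v; split.
      exact: (shift_dindex (s (inr (i, v))) (Hd2 v)).
    by rewrite (setcardAP Hd (shiftAP (s (inr (i, v))) HS)) (setcardAP Hd HS).
Qed.
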